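(* Let $n,k$ be positive integers with $n \geq 3(n-k)$ and $n\geq k$, and let $C\in\mathcal{K}_k(n)$. Let $M_{n,k}=\{k+1,k+2,\dots,2n-k\}$. Then exactly $n-k$ chords of $C$ have their start point in $M_{n,k}$, and exactly $n-k$ chords of $C$ have their end point in $M_{n,k}$.
   Context: A linear chord diagram of size $n$ is a partition of $\{1,2,\dots,2n\}$ into blocks of size two, called chords. For a chord $c=\{s_c,e_c\}$ with $s_c<e_c$, $s_c$ is its start point, $e_c$ its end point, and its length is $e_c-s_c$. $\mathcal{K}_k(n)$ is the set of all linear chord diagrams of size $n$ in which every chord has length at least $k$. *)

(* Defs.v *)
From mathcomp Require Import all_boot.
Set Implicit Arguments. Unset Strict Implicit. Unset Printing Implicit Defensive.

(* Points 1..2n are represented by i : 'I_(2n), where i stands for the point i.+1. *)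
Definition pt (n : nat) (i : 'I_(2 * n)) : nat := (val i).+1.

Definition chord_diagram (n : nat) (C : {set {set 'I_(2 * n)}}) : Prop :=
  partition C [set: 'I_(2 * n)] /\ (forall c, c \in C -> #|c| = 2).

Definition start_pt (n : nat) (c : {set 'I_(2 * n)}) : nat :=
  \big[minn/(2 * n).+1]_(i in c) pt i.
Definition end_pt (n : nat) (c : {set 'I_(2 * n)}) : nat :=
  \max_(i in c) pt i.

Definition in_K (k n : nat) (C : {set {set 'I_(2 * n)}}) : Prop :=
  chord_diagram C /\ (forall c, c \in C -> k <= end_pt c - start_pt c).

Definition M_set (n k : nat) : pred nat := fun m => (k < m) && (m <= 2 * n - k).

(* Main.v *)
Require Import Defs.
From HB Require Import structures.
From mathcomp Require Import all_boot zify.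
HB.instance Definition _ := SemiGroup.isComLaw.Build nat minn minnA minnC.
Set Implicit Arguments. Unset Strict Implicit.

Lemma start_pair n (a b : 'I_(2 * n)) : a < b -> start_pt [set a; b] = a.+1.
Proof.
move=> ab; rewrite /start_pt (bigD1 a) ?inE ?eqxx //=.
rewrite (@big_pred1_id _ _ _ _ b); last first.
  move=> i; rewrite !inE /=; case: (i =P a) => [->|]; first by rewrite andbF eq_sym -val_eqE /= gtn_eqF.
  by rewrite andbT.
rewrite /pt /=; have := ltn_ord b; move=> ?. apply/eqP; rewrite -/(minn _ _) -/(minn _ _); apply/eqP; lia.
Qed.

Lemma end_pair n (a b : 'I_(2 * n)) : a < b -> end_pt [set a; b] = b.+1.
Proof.
move=> ab; rewrite /end_pt (bigD1 a) ?inE ?eqxx //=.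
rewrite (big_pred1 b); last first.
  move=> i; rewrite !inE /=; case: (i =P a) => [->|]; first by rewrite andbF eq_sym -val_eqE /= gtn_eqF.
  by rewrite andbT.
rewrite /pt /=; lia.
Qed.

Lemma chord_shape n (C : {set {set 'I_(2 * n)}}) c :
  chord_diagram C -> c \in C ->
  exists a b : 'I_(2 * n), [/\ a < b, c = [set a; b],
     start_pt c = a.+1 & end_pt c = b.+1].
Proof.
move=> [_ H2] cC; have /cards2P [x [y [xy ->]]] : #|c| == 2 by rewrite H2.
case: (ltngtP x y) => [lt|lt|/val_inj e]; last by rewrite e eqxx in xy.
- by exists x, y; rewrite start_pair // end_pair.
- by exists y, x; rewrite setUC start_pair // end_pair.
Qed.

Lemma card_low m k : k <= m -> #|[set i : 'I_m | i < k]| = k.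
Proof.
move=> km.
have -> : [set i : 'I_m | i < k] = widen_ord km @: [set: 'I_k].
  apply/setP => i; rewrite !inE; apply/idP/imsetP.
  - by move=> ik; exists (Ordinal ik) => //; apply: val_inj.
  - by case=> j _ ->; rewrite /= ltn_ord.
by rewrite card_imset ?cardsT ?card_ord //; move=> p q /(congr1 val) /= /val_inj.
Qed.

Lemma card_high m k : k <= m -> #|[set i : 'I_m | m - k <= i]| = k.
Proof.
move=> km.
have -> : [set i : 'I_m | m - k <= i] = ~: [set i : 'I_m | i < m - k].
  by apply/setP => i; rewrite !inE -leqNgt.
by rewrite cardsCs setCK card_ord card_low ?leq_subr //; lia.
Qed.

Theorem lemma2 (n k : nat) (C : {set {set 'I_(2 * n)}}) :
  0 < n -> 0 < k -> 3 * (n - k) <= n -> k <= n ->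
  in_K k C ->
  #|[set c in C | M_set n k (start_pt c)]| = n - k /\
  #|[set c in C | M_set n k (end_pt c)]| = n - k.
Proof.
move=> n0 k0 _ kn [HC Hlen].
have [Hpart H2] := HC.
have cardC : #|C| = n.
  have := card_partition Hpart; rewrite cardsT card_ord.
  rewrite (eq_bigr (fun _ => 2)); last by move=> c /H2.
  rewrite sum_nat_const; lia.
have [cov triv _] := and3P Hpart.
have inC i : pblock C i \in C by rewrite pblock_mem // (eqP cov) inE.
have inP i : i \in pblock C i by rewrite mem_pblock (eqP cov) inE.
have Slow : #|[set c in C | start_pt c <= k]| = k.
  transitivity #|[set i : 'I_(2 * n) | i < k]|; last by apply: card_low; lia.
  have -> : [set c in C | start_pt c <= k] = pblock C @: [set i : 'I_(2 * n) | i < k].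
    apply/setP => c; rewrite inE; apply/andP/imsetP.
    - case=> cC; have [a [b [ab ec -> _]]] := chord_shape HC cC => ak.
      exists a; first by rewrite inE.
      by rewrite (def_pblock triv cC) // ec !inE eqxx.
    - case=> i; rewrite inE => ik ->; split => //.
      have := Hlen _ (inC i).
      have [a [b [ab e -> ->]]] := chord_shape HC (inC i).
      move: ik; have := inP i; rewrite e !inE => /orP [] /eqP ->; lia.
  rewrite card_in_imset // => i j; rewrite !inE => ik jk e.
  have := Hlen _ (inC i).
  have [a [b [ab ei -> ->]]] := chord_shape HC (inC i).
  move: ik jk; have := inP i; have := inP j; rewrite -e ei !inE.
  by case/orP => /eqP ->; case/orP => /eqP -> //; lia.
have Ehigh : #|[set c in C | 2 * n - k < end_pt c]| = k.
  transitivity #|[set i : 'I_(2 * n) | 2 * n - k <= i]|; last by apply: card_high; lia.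
  have -> : [set c in C | 2 * n - k < end_pt c] = pblock C @: [set i : 'I_(2 * n) | 2 * n - k <= i].
    apply/setP => c; rewrite inE; apply/andP/imsetP.
    - case=> cC; have [a [b [ab ec _ ->]]] := chord_shape HC cC => ak.
      exists b; first by rewrite inE.
      by rewrite (def_pblock triv cC) // ec !inE eqxx orbT.
    - case=> i; rewrite inE => ik ->; split => //.
      have := Hlen _ (inC i).
      have [a [b [ab e -> ->]]] := chord_shape HC (inC i).
      move: ik; have := ltn_ord b; have := inP i; rewrite e !inE => /orP [] /eqP ->; lia.
  rewrite card_in_imset // => i j; rewrite !inE => ik jk e.
  have := Hlen _ (inC i).
  have [a [b [ab ei -> ->]]] := chord_shape HC (inC i).
  move: ik jk; have := ltn_ord b; have := inP i; have := inP j; rewrite -e ei !inE.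
  by case/orP => /eqP ->; case/orP => /eqP -> //; lia.
split.
- have -> : [set c in C | M_set n k (start_pt c)] = C :\: [set c in C | start_pt c <= k].
    apply/setP => c; rewrite !inE /M_set; case cC: (c \in C) => //=; rewrite andbT.
    have := Hlen _ cC; have [a [b [ab _ -> ->]]] := chord_shape HC cC.
    have := ltn_ord b; lia.
  rewrite cardsD cardC; have -> : C :&: [set c in C | start_pt c <= k] = [set c in C | start_pt c <= k].
    by apply/setIidPr/subsetP => c; rewrite inE => /andP [].
  by rewrite Slow.
- have -> : [set c in C | M_set n k (end_pt c)] = C :\: [set c in C | 2 * n - k < end_pt c].
    apply/setP => c; rewrite !inE /M_set; case cC: (c \in C) => //=; rewrite andbT.
    have := Hlen _ cC; have [a [b [ab _ -> ->]]] := chord_shape HC cC.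
    have := ltn_ord b; lia.
  rewrite cardsD cardC; have -> : C :&: [set c in C | 2 * n - k < end_pt c] = [set c in C | 2 * n - k < end_pt c].
    by apply/setIidPr/subsetP => c; rewrite inE => /andP [].
  by rewrite Ehigh.
Qed.
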